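(* Let $d\ge1$, $\emptyset\ne H\subset\mathbb{R}^d$, $R>0$, and let $x,y\in\mathbb{R}^d$ with $d(x,H)\ge R$ and $d(y,H)\ge R$. Then for every $0\le\Delta\le R$, $$d(T_\Delta x,T_\Delta y)\ge\frac{R-\Delta}{R}\,d(x,y).$$
   Context: $d(\cdot,\cdot)$ is Euclidean distance and $d(x,H)=\inf_{z\in H}|x-z|$. Let $\bar H$ be the closure of $H$; for each $x$ let $\pi(x)\in\bar H$ be a point with $|x-\pi(x)|=d(x,H)$ (any one if several). For $\Delta\ge0$, $T_\Delta x:=x+\Delta\frac{\pi(x)-x}{|\pi(x)-x|}$ if $d(x,H)>\Delta$ and $T_\Delta x:=\pi(x)$ if $d(x,H)\le\Delta$. *)

(* Defs.v *)
From HB Require Import structures.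
From mathcomp Require Import all_boot all_order all_algebra.
From mathcomp Require Import all_classical all_reals all_analysis.
Set Implicit Arguments. Unset Strict Implicit. Unset Printing Implicit Defensive.
Import Order.TTheory GRing.Theory Num.Theory.
Import numFieldNormedType.Exports.
Local Open Scope classical_set_scope.
Local Open Scope ring_scope.

(* Euclidean norm |v| on R^d (the library's norm on matrices is the sup norm). *)
Definition enorm (R : realType) (d : nat) (v : 'rV[R]_d) : R :=
  Num.sqrt (\sum_(i < d) v ord0 i ^+ 2).

Definition eucl_dist (R : realType) (d : nat) (x y : 'rV[R]_d) : R := enorm (x - y).

Definition eucl_dist_set (R : realType) (d : nat) (x : 'rV[R]_d) (H : set 'rV[R]_d) : R :=
  inf [set eucl_dist x z | z in H].

Definition nearest_point_map (R : realType) (d : nat) (H : set 'rV[R]_d)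
  (pi : 'rV[R]_d -> 'rV[R]_d) : Prop :=
  forall x, closure H (pi x) /\ eucl_dist x (pi x) = eucl_dist_set x H.

Definition Tmap (R : realType) (d : nat) (H : set 'rV[R]_d)
  (pi : 'rV[R]_d -> 'rV[R]_d) (Delta : R) (x : 'rV[R]_d) : 'rV[R]_d :=
  if Delta < eucl_dist_set x H
  then x + (Delta / enorm (pi x - x)) *: (pi x - x)
  else pi x.

(* Main.v *)
Require Import Defs.
From HB Require Import structures.
From mathcomp Require Import all_boot all_order all_algebra.
From mathcomp Require Import all_classical all_reals all_analysis.
From mathcomp Require Import ring lra.
Import Order.TTheory GRing.Theory Num.Theory.
Import numFieldNormedType.Exports.
Set Implicit Arguments. Unset Strict Implicit.
Local Open Scope classical_set_scope.
Local Open Scope ring_scope.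

Section S.
Variables (R : realType) (d : nat).
Implicit Types u v w : 'rV[R]_d.

Definition dot u v : R := \sum_(i < d) u ord0 i * v ord0 i.

Lemma dotC u v : dot u v = dot v u.
Proof. by apply: eq_bigr => i _; rewrite mulrC. Qed.

Lemma dotDl u v w : dot (u + v) w = dot u w + dot v w.
Proof. by rewrite /dot -big_split; apply: eq_bigr => i _; rewrite !mxE mulrDl. Qed.

Lemma dotNl u w : dot (- u) w = - dot u w.
Proof. by rewrite /dot -sumrN; apply: eq_bigr => i _; rewrite !mxE mulNr. Qed.

Lemma dotBl u v w : dot (u - v) w = dot u w - dot v w.
Proof. by rewrite dotDl dotNl. Qed.

Lemma dotZl k u w : dot (k *: u) w = k * dot u w.
Proof. by rewrite /dot mulr_sumr; apply: eq_bigr => i _; rewrite !mxE mulrA. Qed.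

Lemma dotNr u w : dot w (- u) = - dot w u.
Proof. by rewrite !(dotC w) dotNl. Qed.

Lemma dotDr u v w : dot w (u + v) = dot w u + dot w v.
Proof. by rewrite !(dotC w) dotDl. Qed.
Lemma dotBr u v w : dot w (u - v) = dot w u - dot w v.
Proof. by rewrite !(dotC w) dotBl. Qed.
Lemma dotZr k u w : dot w (k *: u) = k * dot w u.
Proof. by rewrite !(dotC w) dotZl. Qed.

Lemma dot_ge0 u : 0 <= dot u u.
Proof. by apply: sumr_ge0 => i _; rewrite -expr2 sqr_ge0. Qed.

Lemma enormE u : enorm u = Num.sqrt (dot u u).
Proof. by rewrite /enorm /dot; congr Num.sqrt; apply: eq_bigr => i _; rewrite expr2. Qed.

Lemma enorm_sq u : enorm u ^+ 2 = dot u u.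
Proof. by rewrite enormE sqr_sqrtr // dot_ge0. Qed.

Lemma enormN u : enorm (- u) = enorm u.
Proof. by rewrite !enormE dotNl (dotC u) dotNl opprK. Qed.

Lemma cont_sq x : continuous (fun z : 'rV[R]_d => dot (x - z) (x - z)).
Proof.
have -> : (fun z : 'rV[R]_d => dot (x - z) (x - z)) =
  (fun z => \sum_(i < d) ((x ord0 i - z ord0 i) * (x ord0 i - z ord0 i))).
  by apply: funext => z; apply: eq_bigr => i _; rewrite !mxE.
apply: continuous_big; first exact: add_continuous.
move=> i _ z.
have cg : continuous (fun t : R => (x ord0 i - t) * (x ord0 i - t)).
  by move=> t; apply: cvgM; apply: cvgB; [exact: cvg_cst|exact: cvg_id|exact: cvg_cst|exact: cvg_id].
exact: (@continuous_comp _ _ _ (fun M : 'rV[R]_d => M ord0 i) (fun t : R => (x ord0 i - t) * (x ord0 i - t)) z (@coord_continuous R 1 d ord0 i z) (cg _)).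
Qed.

Lemma near_ineq x (H : set 'rV[R]_d) z :
  H !=set0 -> 0 <= eucl_dist_set x H -> closure H z ->
  eucl_dist_set x H ^+ 2 <= dot (x - z) (x - z).
Proof.
move=> H0 D0 cz.
set D := eucl_dist_set x H.
pose S := (fun z : 'rV[R]_d => dot (x - z) (x - z)) @^-1` [set t | D ^+ 2 <= t].
have cS : closed S by move: (cont_sq (x:=x)) => /continuous_closedP; apply; exact: closed_ge.
have HS : H `<=` S.
  move=> h Hh; rewrite /S /= -enorm_sq.
  have : D <= eucl_dist x h.
    apply: ge_inf; last by exists h.
    by exists 0 => _ [h' _ <-]; rewrite /eucl_dist enormE sqrtr_ge0.
  move=> le; rewrite lerXn2r // ?nnegrE //.
  exact: le_trans le.
suff : closure S z by rewrite -(proj1 (closure_id S) cS).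
exact: (closureS HS) cz.
Qed.

End S.
Lemma foo (R : realType) d (x y p q : 'rV[R]_d) : (x - p) - (y - q) = (x - y) - p + q.
Proof. by rewrite opprB addrA [x - y - p]addrAC [RHS]addrAC. Qed.
Lemma foo2 (R : realType) d (x y p : 'rV[R]_d) : (x - y) + (y - p) = x - p.
Proof. by rewrite addrA subrK. Qed.
Lemma foo3 (R : realType) d (x y p : 'rV[R]_d) : (x - p) - (x - y) = y - p.
Proof. by rewrite opprB addrC addrA subrK. Qed.
Lemma foo4 (R : realType) d (x p : 'rV[R]_d) : x - (x - p) = p.
Proof. by rewrite opprB addrC subrK. Qed.

Theorem proposition1 (R : realType) (d : nat) (H : set 'rV[R]_d)
  (pi : 'rV[R]_d -> 'rV[R]_d) (r Delta : R) (x y : 'rV[R]_d) :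
  (1 <= d)%N -> H !=set0 -> 0 < r ->
  nearest_point_map H pi ->
  r <= eucl_dist_set x H -> r <= eucl_dist_set y H ->
  0 <= Delta -> Delta <= r ->
  (r - Delta) / r * eucl_dist x y <= eucl_dist (Tmap H pi Delta x) (Tmap H pi Delta y).
Proof.
move=> _ H0 r0 np rx ry D0 Dr.
have Tx_eq : forall z, r <= eucl_dist_set z H ->
   Tmap H pi Delta z = z - (Delta / eucl_dist_set z H) *: (z - pi z).
  move=> z rz; have a0 : 0 < eucl_dist_set z H by exact: lt_le_trans rz.
  have [_ ez] := np z.
  rewrite /Tmap; case: ifP => h.
    have -> : enorm (pi z - z) = eucl_dist_set z H by rewrite -enormN opprB.
    by rewrite -opprB scalerN.
  have -> : Delta = eucl_dist_set z H.
    by apply/eqP; rewrite eq_le (le_trans Dr rz) /= leNgt h.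
  by rewrite divff ?gt_eqF // scale1r foo4.
rewrite /eucl_dist (Tx_eq x rx) (Tx_eq y ry) foo !enormE.
set al := eucl_dist_set x H; set be := eucl_dist_set y H.
have a0 : 0 < al by exact: lt_le_trans rx.
have b0 : 0 < be by exact: lt_le_trans ry.
have [cpx epx] := np x; have [cpy epy] := np y.
have I1 := @near_ineq _ _ x H (pi y) H0 (ltW a0) cpy.
have I2 := @near_ineq _ _ y H (pi x) H0 (ltW b0) cpx.
rewrite -/al in I1; rewrite -/be in I2.
have sa : dot (x - pi x) (x - pi x) = al ^+ 2 by rewrite -enorm_sq -[enorm _]/(eucl_dist x (pi x)) epx.
have sb : dot (y - pi y) (y - pi y) = be ^+ 2 by rewrite -enorm_sq -[enorm _]/(eucl_dist y (pi y)) epy.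
rewrite -(foo2 x y (pi y)) in I1.
rewrite -(foo3 x y (pi x)) in I2.
move: I1 I2 sa sb.
set a := x - pi x; set b := y - pi y; set w := x - y.
clearbody a b w.
move=> I1 I2 sa sb.
rewrite !(dotDl, dotDr, dotBl, dotBr, dotNl, dotNr, dotZl, dotZr) (dotC b w) in I1.
rewrite !(dotDl, dotDr, dotBl, dotBr, dotNl, dotNr, dotZl, dotZr) (dotC a w) in I2.
set u := w - (Delta / al) *: a + (Delta / be) *: b.
set W := dot w w; set A := dot w a; set B := dot w b.
have W0 : 0 <= W := dot_ge0 w.
have uw : dot u w = W - Delta / al * A + Delta / be * B.
  by rewrite /u !(dotDl, dotBl, dotNl, dotZl) (dotC a w) (dotC b w).
clearbody u.
pose c := (r - Delta) / r.
have c0 : 0 <= c by rewrite /c divr_ge0 ?subr_ge0 // ltW.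
have key : c * W <= dot u w.
  rewrite uw /c.
  rewrite sa in I2; rewrite sb in I1.
  have {}I1 : al ^+ 2 <= W + 2 * B + be ^+ 2 by move: I1; rewrite /W /B; lra.
  have {}I2 : be ^+ 2 <= al ^+ 2 - 2 * A + W by move: I2; rewrite /W /A; lra.
  have s0 : 0 < al^-1 by rewrite invr_gt0.
  have t0 : 0 < be^-1 by rewrite invr_gt0.
  have rr : r * r^-1 = 1 by rewrite divff ?gt_eqF.
  have ss : al * al^-1 = 1 by rewrite divff ?gt_eqF.
  have tt : be * be^-1 = 1 by rewrite divff ?gt_eqF.
  have h1 : al^-1 * A <= al^-1 * ((W + al ^+ 2 - be ^+ 2) / 2).
    apply: ler_wpM2l; [exact: ltW | lra].
  have h2 : be^-1 * ((al ^+ 2 - be ^+ 2 - W) / 2) <= be^-1 * B.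
    apply: ler_wpM2l; [exact: ltW | lra].
  have h3 : (al ^+ 2 - be ^+ 2) * (al^-1 - be^-1) <= 0.
    have e : al^-1 - be^-1 = al^-1 * be^-1 * (be - al) by field; rewrite ?gt_eqF.
    rewrite e.
    have -> : (al ^+ 2 - be ^+ 2) * (al^-1 * be^-1 * (be - al)) =
       - ((al + be) * (al - be) ^+ 2 * (al^-1 * be^-1)) by ring.
    rewrite oppr_le0; apply: mulr_ge0; last by apply: mulr_ge0; apply: ltW.
    by apply: mulr_ge0; [lra | exact: sqr_ge0].
  have h4 : al^-1 * W <= r^-1 * W.
    by rewrite ler_wpM2r // lef_pV2 ?posrE.
  have h5 : be^-1 * W <= r^-1 * W.
    by rewrite ler_wpM2r // lef_pV2 ?posrE.
  have hk : al^-1 * A - be^-1 * B <= r^-1 * W by nra.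
  have := ler_wpM2l D0 hk.
  rewrite /= -!mulrA.
  nra.
have uu : c ^+ 2 * W <= dot u u.
  have h := dot_ge0 (u - c *: w).
  rewrite !(dotDl, dotDr, dotBl, dotBr, dotNl, dotNr, dotZl, dotZr) (dotC w u) -/W in h.
  nra.
rewrite -/c -(ger0_norm c0) -sqrtr_sqr -sqrtrM ?sqr_ge0 //.
exact: ler_wsqrtr.
Qed.
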